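(* Let $H$ be a finite simple connected graph such that $\mathscr{C}(H)$ is an accessible set system. Let $n,\ell$ be integers with $n\geq 2$ and $1\leq \ell<n$, and let $G:=K_n\circ_\ell H$. Then $\mathscr{C}(G)$ is an accessible set system.
   Context: For a graph $\Gamma$ and $A\subseteq V(\Gamma)$, $\omega(\Gamma\setminus A)$ is the number of connected components of the induced subgraph on $V(\Gamma)\setminus A$. A subset $T\subseteq V(\Gamma)$ is a cutset if $T=\emptyset$ or, for every $v\in T$, $\omega(\Gamma\setminus (T\setminus\{v\}))<\omega(\Gamma\setminus T)$; $\mathscr{C}(\Gamma)$ is the set of cutsets. $\mathscr{C}(\Gamma)$ is an accessible set system if for every non-empty $T\in\mathscr{C}(\Gamma)$ there is $t\in T$ with $T\setminus\{t\}\in\mathscr{C}(\Gamma)$. $K_n$ is the complete graph on $n$ vertices. For a subset $L\subseteq V(K_n)$ with $|L|=\ell$, $K_n\circ_\ell H$ denotes the graph obtained from $K_n$ by taking, for each $v\in L$, a disjoint copy $H_v$ of $H$ and joining $v$ to every vertex of $H_v$ (up to isomorphism this does not depend on the choice of $L$). *)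

(* Defs.v *)
From mathcomp Require Import all_boot.
Set Implicit Arguments. Unset Strict Implicit. Unset Printing Implicit Defensive.

Definition simple_graph (V : finType) (e : rel V) : Prop :=
  symmetric e /\ irreflexive e.

Definition induced_rel (V : finType) (e : rel V) (S : {set V}) : rel V :=
  fun x y => [&& x \in S, y \in S & e x y].

Definition ncomp (V : finType) (e : rel V) (S : {set V}) : nat :=
  #|[set [set y in S | connect (induced_rel e S) x y] | x in S]|.

Definition omega (V : finType) (e : rel V) (A : {set V}) : nat :=
  ncomp e (~: A).

Definition connected_graph (V : finType) (e : rel V) : Prop :=
  omega e set0 = 1.

Definition is_cutset (V : finType) (e : rel V) (T : {set V}) : Prop :=
  T = set0 \/ (forall v, v \in T -> omega e (T :\ v) < omega e T).

Definition accessible_cutsets (V : finType) (e : rel V) : Prop :=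
  forall T : {set V}, is_cutset e T -> T != set0 ->
    exists2 t, t \in T & is_cutset e (T :\ t).

(* K_n o_L H : vertices are those of K_n (left) plus, for each v in L,
   a copy of H (pairs (v, h) with v \in L). *)
Definition corona_V (n : nat) (L : {set 'I_n}) (W : finType) : finType :=
  ('I_n + {p : 'I_n * W | p.1 \in L})%type.

Definition corona_rel (n : nat) (L : {set 'I_n}) (W : finType) (eH : rel W)
  : rel (corona_V L W) :=
  fun x y =>
    match x, y with
    | inl i, inl j => i != j
    | inl i, inr q => i == (val q).1
    | inr p, inl j => (val p).1 == j
    | inr p, inr q => ((val p).1 == (val q).1) && eH (val p).2 (val q).2
    end.
Arguments corona_rel {n} L {W} eH.

(* Main.v *)
Require Import Defs.
From mathcomp Require Import all_boot.
Set Implicit Arguments. Unset Strict Implicit. Unset Printing Implicit Defensive.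

Definition lcb (V : finType) (e : rel V) (U : {set V}) (v : V) : bool :=
  [exists a, exists b, [&& a \in U, b \in U, e v a, e v b & ~~ connect (induced_rel e U) a b]].

Lemma connect_pres (T : finType) (e : rel T) (P : pred T) :
  (forall z w, e z w -> P z -> P w) -> forall x y, connect e x y -> P x -> P y.
Proof.
move=> H x y /connectP [p] + ->; elim: p x => [|z p IH] x //=.
by case/andP => exz pz Px; apply: (IH z pz (H _ _ exz Px)).
Qed.

Section Gen.
Variables (V : finType) (e : rel V).
Hypothesis esymm : symmetric e.

Definition cls (S : {set V}) x := [set y in S | connect (induced_rel e S) x y].

Lemma induced_sym (S : {set V}) : symmetric (induced_rel e S).
Proof. by move=> x y; rewrite /induced_rel esymm andbCA. Qed.

Lemma csym (S : {set V}) x y : connect (induced_rel e S) x y = connect (induced_rel e S) y x.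
Proof. exact: (sym_connect_sym (induced_sym S)). Qed.

Lemma cls_eq (S : {set V}) x y : connect (induced_rel e S) x y -> cls S x = cls S y.
Proof.
move=> Hxy; apply/setP=> z; rewrite !inE; case: (z \in S) => //=.
apply/idP/idP => H; last exact: connect_trans Hxy H.
by apply: connect_trans H; rewrite csym.
Qed.

Lemma cls_eqP (S : {set V}) x y : y \in S -> cls S x = cls S y -> connect (induced_rel e S) x y.
Proof.
move=> yS E; have : y \in cls S y by rewrite inE yS connect0.
by rewrite -E inE => /andP[].
Qed.

Lemma sub_conn (S S' : {set V}) x y : S \subset S' ->
  connect (induced_rel e S) x y -> connect (induced_rel e S') x y.
Proof.
move=> sS H; apply: (connect_pres (P := fun z => connect (induced_rel e S') x z)) H _;
  last exact: connect0.
move=> z w /and3P [zS wS ezw] Hz; apply: connect_trans Hz (connect1 _).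
by rewrite /induced_rel (subsetP sS _ zS) (subsetP sS _ wS).
Qed.

Lemma ncomp_add (U : {set V}) v : v \notin U ->
  (ncomp e (v |: U) < ncomp e U) = lcb e U v.
Proof.
move=> vU; set U' := v |: U.
have sUU' : U \subset U' by apply/subsetP => x xU; rewrite !inE xU orbT.
have vU' : v \in U' by rewrite !inE eqxx.
pose g (C : {set V}) := cls U' (odflt v [pick x in C]).
have Hg x : x \in U -> g (cls U x) = cls U' x.
  move=> xU; rewrite /g; case: pickP => [y|H] /=.
    rewrite inE => /andP [yU cxy]; apply/esym/cls_eq; exact: sub_conn cxy.
  by have := H x; rewrite inE xU connect0.
rewrite /ncomp -/(cls U) -/(cls U').
apply/idP/idP.
- apply: contraTT => nlc; rewrite -leqNgt.
  have Hc a b : a \in U -> b \in U -> e v a -> e v b -> connect (induced_rel e U) a b.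
    move=> aU bU ea eb; apply: contraNT nlc => nc; apply/existsP; exists a;
      apply/existsP; exists b; by rewrite aU bU ea eb nc.
  have side x y : x \in U -> y \in U -> connect (induced_rel e U') x y ->
     connect (induced_rel e U) x y ||
     [exists b, [&& b \in U, e v b & connect (induced_rel e U) b y]].
    move=> xU yU cxy.
    pose P z := connect (induced_rel e U) x z ||
       [exists b, [&& b \in U, e v b & connect (induced_rel e U) b z]] || (z == v).
    have : P y.
      apply: (connect_pres (P := P)) cxy _; last by rewrite /P connect0.
      move=> z w /and3P [zU' wU' ezw] Pz.
      case: (eqVneq w v) => [->|nwv]; first by rewrite /P eqxx !orbT.
      have wU : w \in U by move: wU'; rewrite !inE (negbTE nwv).
      case: (eqVneq z v) => [ezv|nzv].
        rewrite /P; apply/orP; left; apply/orP; right; apply/existsP; exists w.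
        by rewrite wU -ezv ezw connect0.
      have zU : z \in U by move: zU'; rewrite !inE (negbTE nzv).
      have Rzw : induced_rel e U z w by rewrite /induced_rel zU wU ezw.
      move: Pz; rewrite /P (negbTE nzv) orbF (negbTE nwv) orbF.
      case/orP => [H|/existsP [b /and3P [bU eb H]]].
        by rewrite (connect_trans H (connect1 Rzw)).
      apply/orP; right; apply/existsP; exists b; by rewrite bU eb (connect_trans H (connect1 Rzw)).
    rewrite /P; have -> : (y == v) = false by apply/negbTE; apply: contraNneq vU => <-.
    by rewrite orbF.
  have ginj : {in [set cls U x | x in U] &, injective g}.
    move=> C1 C2 /imsetP [x xU ->] /imsetP [y yU ->]; rewrite !Hg //.
    move=> E; have cxy := cls_eqP (subsetP sUU' _ yU) E.
    apply: cls_eq.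
    have cyx : connect (induced_rel e U') y x by rewrite csym.
    case/orP: (side x y xU yU cxy) => // /existsP [b /and3P [bU eb cby]].
    case/orP: (side y x yU xU cyx) => [H|/existsP [a /and3P [aU ea cax]]];
      first by rewrite csym.
    apply: (connect_trans _ (connect_trans (Hc a b aU bU ea eb) cby)); by rewrite csym.
  rewrite -(card_in_imset ginj); apply: subset_leq_card; apply/subsetP => C.
  case/imsetP => C1 /imsetP [x xU ->] ->; rewrite Hg //; apply/imsetP; exists x => //.
  exact: subsetP sUU' _ xU.
- case/existsP => a /existsP [b /and5P [aU bU ea eb nc]].
  have sub : [set cls U' x | x in U'] \subset g @: [set cls U x | x in U].
    apply/subsetP => C /imsetP [x xU' ->].
    case: (eqVneq x v) => [->|nxv].
      have -> : cls U' v = cls U' a.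
        apply: cls_eq; apply: connect1; by rewrite /induced_rel vU' (subsetP sUU' _ aU) ea.
      by apply/imsetP; exists (cls U a); [apply/imsetP; exists a|rewrite Hg].
    have xU : x \in U by move: xU'; rewrite !inE (negbTE nxv).
    by apply/imsetP; exists (cls U x); [apply/imsetP; exists x|rewrite Hg].
  apply: leq_ltn_trans (subset_leq_card sub) _.
  rewrite ltn_neqAle leq_imset_card andbT; apply/negP => /imset_injP inj.
  have E : cls U a = cls U b.
    apply: (inj (cls U a) (cls U b)); [by apply/imsetP; exists a|by apply/imsetP; exists b|].
    rewrite !Hg //; apply: cls_eq; apply: (@connect_trans _ _ v); apply: connect1.
      by rewrite /induced_rel vU' (subsetP sUU' _ aU) esymm ea.
    by rewrite /induced_rel vU' (subsetP sUU' _ bU) eb.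
  by rewrite (cls_eqP bU E) in nc.
Qed.

Lemma setCD1U (T : {set V}) v : v \in T -> ~: (T :\ v) = v |: ~: T.
Proof. by move=> vT; apply/setP=> x; rewrite !inE; case: eqP => // ->. Qed.

Lemma cut_lcb (T : {set V}) v : v \in T -> (omega e (T :\ v) < omega e T) = lcb e (~: T) v.
Proof.
move=> vT; rewrite /omega setCD1U //; apply: ncomp_add; by rewrite inE vT.
Qed.

Lemma cutset_lcb (T : {set V}) : is_cutset e T -> forall v, v \in T -> lcb e (~: T) v.
Proof.
case=> [->|H] v vT; first by rewrite inE in vT.
by rewrite -cut_lcb // H.
Qed.

Lemma lcb_cutset (T : {set V}) : (forall v, v \in T -> lcb e (~: T) v) -> is_cutset e T.
Proof. by move=> H; right => v vT; rewrite cut_lcb // H. Qed.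

End Gen.

Section Corona.
Variables (n : nat) (L : {set 'I_n}) (W : finType) (eH : rel W).
Hypothesis symH : symmetric eH.

Notation V := (corona_V L W).
Notation eG := (corona_rel L eH).

Lemma symG : symmetric eG.
Proof.
by move=> [i|p] [j|q] //=; rewrite eq_sym // symH.
Qed.

Definition mk i (hi : i \in L) (w : W) : V := inr (exist _ (i, w) hi).
Definition Tsec (T : {set V}) i (hi : i \in L) : {set W} := [set w | mk hi w \in T].

Notation RG T := (induced_rel eG (~: T)).
Notation RH T hi := (induced_rel eH (~: Tsec T hi)).

Lemma mk_irr i (h1 h2 : i \in L) w : mk h1 w = mk h2 w.
Proof. by rewrite (bool_irrelevance h1 h2). Qed.

Lemma Tsec_irr (T : {set V}) i (h1 h2 : i \in L) : Tsec T h1 = Tsec T h2.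
Proof. by rewrite (bool_irrelevance h1 h2). Qed.

Lemma lift (T : {set V}) i (hi : i \in L) wa wb :
  connect (RH T hi) wa wb -> connect (RG T) (mk hi wa) (mk hi wb).
Proof.
move=> H; apply: (connect_pres (P := fun w => connect (RG T) (mk hi wa) (mk hi w))) H _;
  last exact: connect0.
move=> z w /and3P [zT wT ezw] Hz; apply: connect_trans Hz (connect1 _).
by move: zT wT; rewrite !inE => zT wT; rewrite /induced_rel !inE zT wT /= eqxx.
Qed.

Lemma proj (T : {set V}) i (hi : i \in L) a b : inl i \in T ->
  connect (RG T) (mk hi a) (mk hi b) -> connect (RH T hi) a b.
Proof.
move=> iT H.
pose P (z : V) := match z with inl _ => false
  | inr q => ((val q).1 == i) && connect (RH T hi) a (val q).2 end.
have : P (mk hi b).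
  apply: (connect_pres (P := P)) H _; last by rewrite /P /= eqxx connect0.
  move=> [j|[[i1 w1] h1]] // [j|[[i2 w2] h2]] /and3P [zT wT ezw] /=; rewrite /P /=.
    move: ezw => /= /eqP eij /andP [/eqP ei _]; subst.
    by rewrite inE iT in wT.
  move: ezw => /= /andP [/eqP e12 ew] /andP [/eqP e1 c]; subst.
  rewrite eqxx /=; apply: connect_trans c (connect1 _).
  move: zT wT; rewrite !inE /induced_rel !inE ew andbT.
  by rewrite (mk_irr hi h1) (mk_irr hi h2) /mk => -> ->.
by rewrite /P /= => /andP [].
Qed.

Section Struct.
Variable T : {set V}.
Hypothesis Hc : forall v, v \in T -> lcb eG (~: T) v.

Lemma inl_conn (T' : {set V}) ja jb : inl ja \in ~: T' -> inl jb \in ~: T' ->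
  connect (RG T') (inl ja) (inl jb).
Proof.
move=> ha hb; case: (eqVneq ja jb) => [->|ne]; first exact: connect0.
by apply: connect1; rewrite /induced_rel ha hb /=.
Qed.

Lemma notL j : j \notin L -> inl j \notin T.
Proof.
move=> jL; apply/negP => hj; have := Hc hj.
case/existsP => a /existsP [b /and5P [ha hb ea eb nc]].
case: a ha ea nc => [ja|qa] ha ea nc; last first.
  by move: ea => /= /eqP ej; move: jL; rewrite ej (valP qa).
case: b hb eb nc => [jb|qb] hb eb nc; last first.
  by move: eb => /= /eqP ej; move: jL; rewrite ej (valP qb).
by rewrite inl_conn in nc.
Qed.

Lemma inT_L i : inl i \in T -> i \in L.
Proof. exact: (contraTT (@notL i)). Qed.

Lemma inrT q : inr q \in T -> inl (val q).1 \in T.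
Proof.
move=> qT; apply/negPn/negP => iT.
have := Hc qT; case/existsP => a /existsP [b /and5P [ha hb ea eb nc]].
have Hn c : c \in ~: T -> eG (inr q) c -> connect (RG T) (inl (val q).1) c.
  case: c => [j|q'] hc ec.
    by move: ec => /= /eqP <-; exact: connect0.
  apply: connect1; rewrite /induced_rel hc inE iT /=.
  by case/andP: ec.
move: nc; rewrite (connect_trans _ (Hn b hb eb)) //.
by rewrite csym ?Hn //; exact: symG.
Qed.

Lemma nbr_inr (T' : {set V}) q c : inl (val q).1 \in T' -> c \in ~: T' -> eG (inr q) c ->
  exists w, [/\ c = mk (valP q) w, w \notin Tsec T' (valP q) & eH (val q).2 w].
Proof.
move=> iT; case: c => [j|[[i' w'] h']] hc ec.
  by move: ec => /= /eqP ej; rewrite -ej inE iT in hc.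
move: ec => /= /andP [/eqP ei ew]; exists w'.
have E : inr (exist _ (i', w') h') = mk (valP q) w'.
  by rewrite /mk; congr inr; apply: val_inj; rewrite /= ei.
split=> //; by rewrite inE -E; rewrite inE in hc.
Qed.

Lemma Tsec_cut q : inr q \in T -> lcb eH (~: Tsec T (valP q)) (val q).2.
Proof.
move=> qT; have iT := inrT qT.
have := Hc qT; case/existsP => a /existsP [b /and5P [ha hb ea eb nc]].
have [wa [Ea na ewa]] := nbr_inr iT ha ea.
have [wb [Eb nb ewb]] := nbr_inr iT hb eb.
apply/existsP; exists wa; apply/existsP; exists wb.
rewrite [wa \in _]inE [wb \in _]inE na nb ewa ewb /=; apply: contra nc => c.
by rewrite Ea Eb; apply: lift.
Qed.

Lemma Tsec_cut' i (hi : i \in L) w : mk hi w \in T -> lcb eH (~: Tsec T hi) w.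
Proof. by move=> h; have := Tsec_cut h; rewrite (Tsec_irr _ _ hi). Qed.

Lemma inl_out i (hi : i \in L) : inl i \in T -> exists w, mk hi w \notin T.
Proof.
move=> iT; have := Hc iT.
case/existsP => a /existsP [b /and5P [ha hb ea eb nc]].
have Hr (qa : {p : 'I_n * W | p.1 \in L}) : inr qa \in ~: T -> eG (inl i) (inr qa) ->
    exists w, mk hi w \notin T.
  case: qa => [[i' w'] h'] hq /= /eqP ei; subst; exists w'.
  by rewrite (mk_irr hi h'); rewrite inE in hq.
case: a ha ea nc => [ja|qa] ha ea nc; last exact: Hr ha ea.
case: b hb eb nc => [jb|qb] hb eb nc; last exact: Hr hb eb.
by rewrite inl_conn in nc.
Qed.

End Struct.

Lemma inl_ok (T' : {set V}) k (hk : k \in L) j w : j \notin L -> inl k \in T' ->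
  inl j \notin T' -> mk hk w \notin T' -> lcb eG (~: T') (inl k).
Proof.
move=> jL kT jT wT; apply/existsP; exists (inl j); apply/existsP; exists (mk hk w).
rewrite !inE jT wT /= eqxx.
have -> /= : k != j by apply: contraNneq jL => <-.
rewrite csym; last exact: symG.
apply/negP => H.
pose P (z : V) := match z with inl _ => false | inr q => (val q).1 == k end.
have : P (inl j).
  apply: (connect_pres (P := P)) H _; last by rewrite /P /= eqxx.
  move=> [j1|q1] [j2|q2] /and3P [zT wT' ezw] //=.
    by move: ezw => /= /eqP -> /eqP ek; rewrite ek inE kT in wT'.
  by move: ezw => /= /andP [/eqP <- _].
by [].
Qed.

Lemma inr_ok (T' : {set V}) q : inr q \in T' -> inl (val q).1 \in T' ->
  lcb eH (~: Tsec T' (valP q)) (val q).2 -> lcb eG (~: T') (inr q).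
Proof.
move=> qT iT /existsP [wa /existsP [wb /and5P [ha hb ea eb nc]]].
apply/existsP; exists (mk (valP q) wa); apply/existsP; exists (mk (valP q) wb).
move: ha hb; rewrite !inE => ha hb; rewrite ha hb /= eqxx ea eb /=.
by apply: contra nc; apply: proj.
Qed.

End Corona.

Theorem theorem3p10 (W : finType) (eH : rel W) (n l : nat) (L : {set 'I_n}) :
  simple_graph eH -> connected_graph eH -> accessible_cutsets eH ->
  2 <= n -> 1 <= l < n -> #|L| = l ->
  accessible_cutsets (corona_rel L eH).
Proof.
move=> [symH _] _ accH _ /andP [_ ln] cardL T cutT Tne.
have sG := symG (L := L) symH.
have Hc := cutset_lcb sG cutT.
have /subsetPn [j _ jL] : ~~ ([set: 'I_n] \subset L).
  by apply/negP => /subset_leq_card; rewrite cardsT card_ord cardL leqNgt ln.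
have jT := notL Hc jL.
have inl_case (t : corona_V L W) k : inl k \in T :\ t -> lcb (corona_rel L eH) (~: (T :\ t)) (inl k).
  move=> /setD1P [kt kT]; have hk := inT_L Hc kT.
  have [w wT] := inl_out Hc hk kT.
  apply: (inl_ok symH (j := j) (w := w)) => //; first by rewrite !inE kt.
    by rewrite !inE negb_and jT orbT.
  by rewrite !inE negb_and wT orbT.
case: (pickP (fun q => inr q \in T)) => [[[i w0] hi] hq | noinr]; last first.
  case/set0Pn: Tne => v vT; exists v => //.
  apply: lcb_cutset => // -[k|q] hu; first exact: inl_case.
  by move: hu => /setD1P [_]; rewrite noinr.
set S := Tsec T hi.
have hS : S != set0 by apply/set0Pn; exists w0; rewrite inE.
have cutS : is_cutset eH S.
  apply: lcb_cutset => // w hw.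
  move: hw; rewrite inE => hw; exact: (Tsec_cut' symH Hc hw).
have [tw twS cutS'] := accH S cutS hS.
exists (mk hi tw); first by rewrite inE in twS.
apply: lcb_cutset => // -[k|[[i' w'] hq']] hv; first exact: inl_case.
have hv' := hv; move: hv' => /setD1P [vt vT].
apply: inr_ok => //=.
  have := inrT symH Hc vT; rewrite /= => iT; by rewrite !inE iT.
rewrite (Tsec_irr _ _ hq').
case: (eqVneq i' i) => [ei|nei].
  subst i'.
  have E : Tsec (T :\ mk hi tw) hq' = S :\ tw.
    apply/setP => w; rewrite !inE (mk_irr hq' hi); congr andb.
    case: (eqVneq w tw) => [->|ne]; first by rewrite eqxx.
    apply/negP => /eqP [] E.
    by rewrite E eqxx in ne.
  rewrite E; have w'S : w' \in S :\ tw by rewrite -E inE.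
  case: cutS' => [e0|H]; first by rewrite e0 inE in w'S.
  by rewrite -cut_lcb // H.
have -> : Tsec (T :\ mk hi tw) hq' = Tsec T hq'.
  apply/setP => w; rewrite !inE.
  have -> : (mk hq' w != mk hi tw) by apply/eqP => -[] E; rewrite E eqxx in nei.
  by [].
exact: (Tsec_cut' symH Hc vT).
Qed.
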